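(* Let $G$ be a simple graph with adjacency matrix $A$. If $\mathrm{LCP}(A+I,-\mathbf{e})$ is w-unique, then $\mathbf{e}^\top x$ is constant over all solutions $x$ of $\mathrm{LCP}(A+I,-\mathbf{e})$, and consequently $G$ is well-covered.
   Context: $x$ solves $\mathrm{LCP}(M,q)$ if $x\geq 0$, $Mx+q\geq 0$ and $x^\top(Mx+q)=0$; here $M=A+I$, $q=-\mathbf{e}$ ($I$ identity, $\mathbf{e}$ all-ones vector). $\mathrm{LCP}(M,q)$ is w-unique if the vector $Mx+q$ is the same for all solutions $x$. A graph is well-covered if all its maximal independent sets have the same cardinality. *)

(* Defs.v *)
From HB Require Import structures.
From mathcomp Require Import all_boot all_order all_algebra.
From mathcomp Require Import reals.
Set Implicit Arguments. Unset Strict Implicit. Unset Printing Implicit Defensive.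
Import Order.TTheory GRing.Theory Num.Theory.
Local Open Scope ring_scope.

Definition simple_graph (n : nat) (adj : rel 'I_n) : Prop :=
  (forall i, ~~ adj i i) /\ (forall i j, adj i j = adj j i).

Definition adjmx (R : realType) (n : nat) (adj : rel 'I_n) : 'M[R]_n :=
  \matrix_(i, j) (adj i j)%:R.

Definition ones (R : realType) (n : nat) : 'cV[R]_n := const_mx 1.

Definition LCP_sol (R : realType) (n : nat) (M : 'M[R]_n) (q x : 'cV[R]_n) : Prop :=
  (forall i, 0 <= x i 0) /\ (forall i, 0 <= (M *m x + q) i 0) /\
  (x^T *m (M *m x + q)) 0 0 = 0.

Definition w_unique (R : realType) (n : nat) (M : 'M[R]_n) (q : 'cV[R]_n) : Prop :=
  forall x y, LCP_sol M q x -> LCP_sol M q y -> M *m x + q = M *m y + q.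

Definition independent (n : nat) (adj : rel 'I_n) (S : {set 'I_n}) : Prop :=
  forall i j, i \in S -> j \in S -> ~~ adj i j.

Definition maximal_independent (n : nat) (adj : rel 'I_n) (S : {set 'I_n}) : Prop :=
  independent adj S /\
  (forall T : {set 'I_n}, independent adj T -> S \subset T -> T = S).

Definition well_covered (n : nat) (adj : rel 'I_n) : Prop :=
  forall S T : {set 'I_n}, maximal_independent adj S -> maximal_independent adj T ->
    #|S| = #|T|.

(* Main.v *)
Require Import Defs.
From HB Require Import structures.
From mathcomp Require Import all_boot all_order all_algebra.
From mathcomp Require Import reals.
Import Order.TTheory GRing.Theory Num.Theory.
Local Open Scope ring_scope.

Lemma sym_M (R : realType) (n : nat) (adj : rel 'I_n) :
  simple_graph adj -> (adjmx R adj + 1%:M)^T = adjmx R adj + 1%:M.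
Proof.
move=> [_ hs]; rewrite linearD /= tr_scalar_mx; congr (_ + _).
by apply/matrixP=> i j; rewrite !mxE hs.
Qed.

Lemma tr11 (R : realType) (A : 'M[R]_1) : A^T 0 0 = A 0 0.
Proof. by rewrite mxE. Qed.

Lemma part1 (R : realType) (n : nat) (adj : rel 'I_n) :
  simple_graph adj ->
  w_unique (adjmx R adj + 1%:M) (- ones R n) ->
  (forall x y : 'cV[R]_n,
      LCP_sol (adjmx R adj + 1%:M) (- ones R n) x ->
      LCP_sol (adjmx R adj + 1%:M) (- ones R n) y ->
      ((ones R n)^T *m x) 0 0 = ((ones R n)^T *m y) 0 0).
Proof.
move=> hg hw x y hx hy.
have hxy := hw x y hx hy.
set M := adjmx R adj + 1%:M in hxy hx hy *.
set e := ones R n in hxy hx hy *.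
case: hx => _ [_ hx]; case: hy => _ [_ hy].
have h1 : (y^T *m (M *m x)) 0 0 = (y^T *m e) 0 0.
  have : (y^T *m (M *m x + - e)) 0 0 = 0 by rewrite hxy.
  by rewrite mulmxDr mulmxN !mxE => /eqP; rewrite subr_eq0 => /eqP.
have h2 : (x^T *m (M *m y)) 0 0 = (x^T *m e) 0 0.
  have : (x^T *m (M *m y + - e)) 0 0 = 0 by rewrite -hxy.
  by rewrite mulmxDr mulmxN !mxE => /eqP; rewrite subr_eq0 => /eqP.
have h3 : (y^T *m (M *m x)) 0 0 = (x^T *m (M *m y)) 0 0.
  rewrite -tr11 !trmx_mul trmxK mulmxA.
  by rewrite /M sym_M.
rewrite -tr11 trmx_mul trmxK -h2 -h3 h1 -tr11 trmx_mul trmxK.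
by [].
Qed.

Lemma indic_sol (R : realType) (n : nat) (adj : rel 'I_n) (S : {set 'I_n}) :
  simple_graph adj -> maximal_independent adj S ->
  LCP_sol (adjmx R adj + 1%:M) (- ones R n) (\col_i ((i \in S)%:R : R)).
Proof.
move=> [hirr hsym] [hind hmax].
set x := \col_i ((i \in S)%:R : R).
have hA : forall i, (adjmx R adj *m x) i 0 = \sum_(j in S) (adj i j)%:R.
  move=> i; rewrite mxE [RHS]big_mkcond /=; apply: eq_bigr => j _.
  by rewrite /x /adjmx !mxE; case: (j \in S); rewrite ?mulr1 ?mulr0.
have hw : forall i, ((adjmx R adj + 1%:M) *m x + - ones R n) i 0
    = \sum_(j in S) (adj i j)%:R + (i \in S)%:R - 1.
  by move=> i; rewrite mulmxDl mul1mx !mxE -hA !mxE.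
have hwS : forall i, i \in S -> ((adjmx R adj + 1%:M) *m x + - ones R n) i 0 = 0.
  move=> i iS; rewrite hw iS big1 ?add0r ?subrr // => j jS.
  by rewrite (negbTE (hind _ _ iS jS)).
split; first by move=> i; rewrite mxE ler0n.
split.
  move=> i; case iS: (i \in S); first by rewrite hwS.
  rewrite hw iS addr0 subr_ge0.
  have [j jS aij] : exists2 j, j \in S & adj i j.
    case: (boolP [exists j in S, adj i j]) => [/exists_inP //|/negP hno]; exfalso.
    have hT : independent adj (i |: S).
      move=> a b; rewrite !in_setU1 => /predU1P[-> | aS] /predU1P[-> | bS].
      - exact: hirr.
      - by apply/negP => hab; apply: hno; apply/exists_inP; exists b.
      - by apply/negP => hab; apply: hno; apply/exists_inP; exists a; rewrite // hsym.
      - exact: hind.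
    have := hmax _ hT (subsetUr _ _) => hE.
    by move: iS; rewrite -hE setU11.
  rewrite (bigD1 j) //= aij -[X in X <= _]addr0 lerD2l.
  by apply: sumr_ge0 => k _; rewrite ler0n.
rewrite mxE big1 // => i _.
case iS: (i \in S); first by rewrite hwS ?mulr0.
by rewrite mxE /x mxE iS mul0r.
Qed.

Lemma indic_sum (R : realType) (n : nat) (S : {set 'I_n}) :
  ((ones R n)^T *m (\col_i ((i \in S)%:R : R))) 0 0 = #|S|%:R.
Proof.
rewrite !mxE (bigID (fun i => i \in S)) /= addrC big1 ?add0r; last first.
  by move=> i /negbTE iS; rewrite !mxE iS mulr0.
rewrite (eq_bigr (fun _ => 1)); last by move=> i iS; rewrite !mxE iS mulr1.
by rewrite sumr_const.
Qed.

Theorem lemma8 (R : realType) (n : nat) (adj : rel 'I_n) :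
  simple_graph adj ->
  w_unique (adjmx R adj + 1%:M) (- ones R n) ->
  (forall x y : 'cV[R]_n,
      LCP_sol (adjmx R adj + 1%:M) (- ones R n) x ->
      LCP_sol (adjmx R adj + 1%:M) (- ones R n) y ->
      ((ones R n)^T *m x) 0 0 = ((ones R n)^T *m y) 0 0)
  /\ well_covered adj.
Proof.
move=> hg hw; have h1 := @part1 R n adj hg hw; split => //.
move=> S T hS hT.
have := h1 _ _ (@indic_sol R n adj S hg hS) (@indic_sol R n adj T hg hT).
by rewrite !indic_sum => /eqP; rewrite eqr_nat => /eqP.
Qed.
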